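(* Let $1\le t\le k-1$ and let $x$ be the frequency vector of an $\mathrm{OA}(N,k,2,t)$ with symbols from $\{-1,1\}$. If $t$ is even, then the formulation symmetry group of ILP (M) contains (the permutations of variables induced by) $G(k)^{\rm OD}$, and for each $g\in G(k)^{\rm OD}$, $g(x)$ is the frequency vector of an $\mathrm{OA}(N,k,2,t)$ that is OD-equivalent to the one with frequency vector $x$. If $t$ is odd, then the formulation symmetry group of ILP (M) contains $G^{\rm iso}(k,2)$, and for each $g\in G^{\rm iso}(k,2)$, $g(x)$ is the frequency vector of an $\mathrm{OA}(N,k,2,t)$ isomorphic to the one with frequency vector $x$.
   Context: An $\mathrm{OA}(N,k,2,t)$ over $\{-1,1\}$ is an $N\times k$ array such that in every $N\times t$ subarray each of the $2^t$ $t$-tuples appears $N/2^t$ times. Its frequency vector is $x=(x_z)_{z\in\{-1,1\}^k}$, $x_z$ the number of rows equal to $z$. Let $Z$ be the $2^k\times k$ matrix whose rows are all vectors of $\{-1,1\}^k$, with columns $z_1,\dots,z_k$, and for $i_1<\dots<i_r$ let $z_{i_1,\dots,i_r}$ be the entrywise product $z_{i_1}\odot\cdots\odot z_{i_r}$. $M$ is the matrix whose rows are $z_{i_1,\dots,i_r}^{\top}$ for all $1\le r\le t$ and all $i_1<\dots<i_r$. ILP (M) is: minimize $\mathbf 1^{\top}x$ s.t. $\mathbf 1^{\top}x=N$, $Mx=0$, $-Mx=0$, $x\ge0$, $x\in\mathbb Z^{2^k}$. Formulation symmetry group: the set of variable permutations $\pi$ with $\pi(c)=c$ for which there exist row permutations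 of the equality and inequality systems that, together with permuting columns by $\pi$, return the same constraint matrices and right-hand sides. $G(k)^{\rm OD}$ is the group of permutations of $\{-1,1\}^k$ generated by coordinate permutations, single-coordinate sign changes, and $R_i(z_1,\dots,z_k)=(z_1z_i,\dots,z_{i-1}z_i,z_i,z_{i+1}z_i,\dots,z_kz_i)$; $G^{\rm iso}(k,2)$ is the subgroup generated by coordinate permutations and sign changes. A permutation $g$ of $\{-1,1\}^k$ acts on frequency vectors by $g(x)_{g(z)}=x_z$. Two arrays are isomorphic if the multiset of rows of one equals that of the image of the other under some element of $G^{\rm iso}(k,2)$. $X_1,X_2$ are OD-equivalent if $[\mathbf 1,X_1]$ and $[\mathbf 1,X_2]$ are related by signed permutations of rows and columns. *)

(* Defs.v *)
From HB Require Import structures.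
From mathcomp Require Import all_boot all_order all_fingroup all_algebra.
Set Implicit Arguments. Unset Strict Implicit. Unset Printing Implicit Defensive.
Import GRing.Theory Num.Theory.
Local Open Scope ring_scope.

(* Points of {-1,1}^k, encoded as boolean vectors: false <-> 1, true <-> -1. *)
Definition pt (k : nat) := {ffun 'I_k -> bool}.

Definition sgn (b : bool) : int := if b then -1 else 1.

Definition freq (N k : nat) (X : 'M[int]_(N, k)) : {ffun pt k -> nat} :=
  [ffun z : pt k => #|[set r : 'I_N | [forall j : 'I_k, X r j == sgn (z j)]]|].

Definition is_OA (N k t : nat) (X : 'M[int]_(N, k)) : Prop :=
  (forall r j, X r j = 1 \/ X r j = -1) /\
  forall (S : {set 'I_k}), #|S| = t ->
  forall u : pt k,
    (#|[set r : 'I_N | [forall j in S, X r j == sgn (u j)]]| * 2 ^ t)%N = N.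

(* rows of M: the products z_{i_1,...,i_r} for 1 <= r <= t, i_1 < ... < i_r,
   indexed by the set {i_1,...,i_r} *)
Definition Mrow (k t : nat) := {S : {set 'I_k} | (0 < #|S| <= t)%N}.

Definition Mentry (k t : nat) (S : Mrow k t) (z : pt k) : int :=
  \prod_(i in val S) sgn (z i).

(* Equality system: row None is 1^T x = N, rows Some (inl S) are M x = 0,
   rows Some (inr S) are -M x = 0. *)
Definition Erow (k t : nat) := option (Mrow k t + Mrow k t).

Definition Aeq (k t : nat) (i : Erow k t) (z : pt k) : int :=
  match i with
  | None => 1
  | Some (inl R) => Mentry R z
  | Some (inr R) => - Mentry R z
  end.

Definition beq (N k t : nat) (i : Erow k t) : int :=
  match i with None => N%:Z | Some _ => 0 end.

(* Inequality system: x >= 0, i.e. I x >= 0, rows indexed by the variables. *)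
Definition Aineq (k : nat) (w z : pt k) : int := (w == z)%:R.
Definition bineq (k : nat) (w : pt k) : int := 0.

Definition cobj (k : nat) (z : pt k) : int := 1.

Definition formulation_sym (N k t : nat) (pi : {perm pt k}) : Prop :=
  (forall z, cobj (pi z) = cobj z) /\
  (exists sigma : {perm Erow k t},
      forall i z, Aeq (sigma i) (pi z) = Aeq i z /\
                  beq N (sigma i) = beq N i) /\
  (exists tau : {perm pt k},
      forall w z, Aineq (tau w) (pi z) = Aineq w z /\
                  bineq (tau w) = bineq w).

Definition coordperm (k : nat) (s : {perm 'I_k}) (z : pt k) : pt k :=
  [ffun i => z (s i)].
Definition signchange (k : nat) (j : 'I_k) (z : pt k) : pt k :=
  [ffun i => if i == j then ~~ z i else z i].
(* R_i(z) = (z_1 z_i, ..., z_{i-1} z_i, z_i, z_{i+1} z_i, ..., z_k z_i);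
   multiplication of +-1 is xor in the boolean encoding *)
Definition Rmap (k : nat) (i : 'I_k) (z : pt k) : pt k :=
  [ffun j => if j == i then z i else addb (z j) (z i)].

Definition iso_gens (k : nat) : {set {perm pt k}} :=
  [set g : {perm pt k} |
     [exists s : {perm 'I_k}, [forall z, g z == coordperm s z]] ||
     [exists j : 'I_k, [forall z, g z == signchange j z]]].

Definition OD_gens (k : nat) : {set {perm pt k}} :=
  iso_gens k :|:
  [set g : {perm pt k} | [exists i : 'I_k, [forall z, g z == Rmap i z]]].

Definition G_iso (k : nat) : {set {perm pt k}} := <<iso_gens k>>%g.
Definition G_OD (k : nat) : {set {perm pt k}} := <<OD_gens k>>%g.

(* action on frequency vectors: g(x)_{g(z)} = x_z *)
Definition act_freq (k : nat) (g : {perm pt k}) (x : {ffun pt k -> nat})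
  : {ffun pt k -> nat} := [ffun w => x ((g^-1)%g w)].

(* isomorphic arrays: the multiset of rows of X2 equals that of the image of
   X1 under some element of G^iso(k,2) *)
Definition isomorphic (N k : nat) (X1 X2 : 'M[int]_(N, k)) : Prop :=
  exists2 h, h \in G_iso k & freq X2 = act_freq h (freq X1).

Definition signed_perm_mx (n : nat) (A : 'M[int]_n) : Prop :=
  exists (s : {perm 'I_n}) (e : 'I_n -> bool),
    A = \matrix_(i, j) (if s i == j then sgn (e i) else 0).

Definition onecol (N k : nat) (X : 'M[int]_(N, k)) : 'M[int]_(N, 1 + k) :=
  row_mx (const_mx 1) X.

Definition OD_equiv (N k : nat) (X1 X2 : 'M[int]_(N, k)) : Prop :=
  exists (P : 'M[int]_N) (Q : 'M[int]_(1 + k)),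
    signed_perm_mx P /\ signed_perm_mx Q /\
    P *m onecol X1 *m Q = onecol X2.

(* Main.v *)
Require Import Defs.
From HB Require Import structures.
From mathcomp Require Import all_boot all_order all_fingroup all_algebra.
From mathcomp Require Import zify ring.
Set Implicit Arguments. Unset Strict Implicit. Unset Printing Implicit Defensive.
Import GRing.Theory Num.Theory.
Local Open Scope ring_scope.

Lemma sgn_eq a b : (sgn a == sgn b) = (a == b).
Proof. by case: a; case: b. Qed.

Lemma sgn_inj : injective sgn.
Proof. by move=> a b /eqP; rewrite sgn_eq => /eqP. Qed.

Lemma sgn_addb a b : sgn (a (+) b) = sgn a * sgn b.
Proof. by case: a; case: b; rewrite /sgn /= ?mulN1r ?mul1r ?opprK. Qed.

Lemma sgn_neg a : sgn (~~ a) = - sgn a.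
Proof. by case: a; rewrite /sgn /= ?opprK. Qed.

Lemma sgn_sq a : sgn a * sgn a = 1.
Proof. by case: a; rewrite /sgn ?mulN1r ?opprK ?mul1r. Qed.

Lemma sgnN1 a : (sgn a == -1) = a.
Proof. by case: a. Qed.

Lemma Mentry0 k t (S : Mrow k t) : Mentry S [ffun => false] = 1.
Proof. by rewrite /Mentry big1 // => i _; rewrite ffunE. Qed.

Lemma prod_ind k (S : {set 'I_k}) j :
  \prod_(i in S) sgn ([ffun i => i == j] i) = if j \in S then -1 else 1.
Proof.
case: ifP => jS.
  rewrite (bigD1 j) //= ffunE eqxx big1 ?mulr1 // => i /andP [_ ij].
  by rewrite ffunE (negbTE ij).
by rewrite big1 // => i iS; rewrite ffunE; case: eqP => // ij; rewrite -ij iS in jS.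
Qed.

Lemma Mentry_inj k t (S1 S2 : Mrow k t) :
  (forall z, Mentry S1 z = Mentry S2 z) -> S1 = S2.
Proof.
move=> H; apply: val_inj; apply/setP => j.
have := H [ffun i => i == j]; rewrite /Mentry !prod_ind.
by case: (j \in val S1); case: (j \in val S2).
Qed.

Lemma Mentry_ne1 k t (S : Mrow k t) : exists z, Mentry S z = -1.
Proof.
case: S => S HS; have /andP [H _] := HS.
have [j jS] : exists j, j \in S.
  by case/card_gt0P: H => j jS; exists j.
by exists [ffun i => i == j]; rewrite /Mentry /= prod_ind jS.
Qed.

Lemma Aeq_inj k t (i1 i2 : Erow k t) :
  (forall z, Aeq i1 z = Aeq i2 z) -> i1 = i2.
Proof.
have n11 : (1 : int) <> -1 by [].
move=> H; have H0 := H [ffun => false].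
case: i1 H H0 => [[S1|S1]|]; case: i2 => [[S2|S2]|] //= H H0;
  rewrite ?Mentry0 in H0.
all: first [ by move/eqP: H0
  | by rewrite (@Mentry_inj _ _ S1 S2) // => z; apply: oppr_inj
  | by rewrite (@Mentry_inj _ _ S1 S2)
  | by case: (Mentry_ne1 S1) => z Hz; have := H z; rewrite Hz
  | by case: (Mentry_ne1 S2) => z Hz; have := H z; rewrite Hz ].
Qed.

Lemma gen_ind (gT : finGroupType) (A : {set gT}) (P : gT -> Prop) :
  P 1%g -> (forall a b, P a -> b \in A -> P (a * b)%g) ->
  forall g, g \in <<A>>%g -> P g.
Proof.
move=> P1 PM g /gen_prodgP [n [c Hc ->]].
elim: n c Hc => [|n IH] c Hc; first by rewrite big_ord0.
rewrite big_ord_recr /=; apply: PM => //; apply: IH => i; exact: Hc.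
Qed.

Definition charperm k t (g : {perm pt k}) :=
  forall S : Mrow k t, exists S' : Mrow k t, exists e : bool,
    forall z, Mentry S (g z) = sgn e * Mentry S' z.

Lemma charperm1 k t : charperm t (1%g : {perm pt k}).
Proof. by move=> S; exists S, false => z; rewrite perm1 mul1r. Qed.

Lemma charpermM k t (a b : {perm pt k}) :
  charperm t a -> charperm t b -> charperm t (a * b)%g.
Proof.
move=> Ha Hb S; have [S1 [e1 H1]] := Hb S; have [S2 [e2 H2]] := Ha S1.
exists S2, (e1 (+) e2) => z; rewrite permM H1 H2 sgn_addb mulrA //.
Qed.

Lemma charpermV k t (g : {perm pt k}) (S : Mrow k t) :
  charperm t g^-1%g -> exists S' : Mrow k t, exists e : bool,
    forall z, Mentry S' (g z) = sgn e * Mentry S z.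
Proof.
move=> H; have [S' [e HS]] := H S; exists S', e => z.
have := HS (g z); rewrite permK => ->.
by rewrite mulrA sgn_sq mul1r.
Qed.

Lemma charperm_formsym N k t (g : {perm pt k}) :
  charperm t g^-1%g -> formulation_sym N t g.
Proof.
move=> H; split; first by move=> z.
split.
  have ex : forall i : Erow k t, exists i' : Erow k t,
      (forall z, Aeq i' (g z) = Aeq i z) /\ beq N i' = beq N i.
    case=> [[S|S]|]; last by exists None.
    - have [S' [e HS]] := charpermV S H.
      exists (Some (if e then inr S' else inl S')); split; last by case: (e).
      by move=> z; move: HS; case: (e) => HS; rewrite /Aeq HS /sgn ?mulN1r ?opprK ?mul1r.
    - have [S' [e HS]] := charpermV S H.
      exists (Some (if e then inl S' else inr S')); split; last by case: (e).
      by move=> z; move: HS; case: (e) => HS; rewrite /Aeq HS /sgn ?mulN1r ?opprK ?mul1r.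
  have [f Hf] := fin_all_exists ex.
  have finj : injective f.
    move=> i1 i2 E; apply: Aeq_inj => z.
    have H1 := proj1 (Hf i1) z; have H2 := proj1 (Hf i2) z.
    by rewrite -H1 -H2 E.
  exists (perm finj) => i z; rewrite permE; exact: (conj (proj1 (Hf i) z) (proj2 (Hf i))).
exists g => w z; split => //.
by rewrite /Aineq (inj_eq (@perm_inj _ g)).
Qed.

Lemma mk_Mrow_proof k t (S : {set 'I_k}) : (0 < #|S| <= t)%N -> (0 < #|S| <= t)%N.
Proof. by []. Qed.

Lemma charperm_coord k t (g : {perm pt k}) (s : {perm 'I_k}) :
  (forall z, g z = coordperm s z) -> charperm t g.
Proof.
move=> Hg [S HS].
have HS' : (0 < #|s @: S| <= t)%N by rewrite card_imset //; exact: perm_inj.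
exists (exist _ (s @: S) HS'), false => z.
rewrite mul1r /Mentry /= big_imset /=; last by move=> x y _ _; exact: perm_inj.
by apply: eq_bigr => i _; rewrite Hg ffunE.
Qed.

Lemma prod_signchange k (S : {set 'I_k}) j z :
  \prod_(i in S) sgn (signchange j z i) =
  sgn (j \in S) * \prod_(i in S) sgn (z i).
Proof.
case: (boolP (j \in S)) => jS.
  rewrite (bigD1 j jS) /= (bigD1 j jS) /= ffunE eqxx sgn_neg.
  rewrite (eq_bigr (fun i => sgn (z i))); last first.
    by move=> i /andP [_ ij]; rewrite ffunE (negbTE ij).
  by rewrite mulN1r mulNr.
rewrite /sgn /= mul1r; apply: eq_bigr => i iS; rewrite ffunE.
by case: eqP => // ij; rewrite -ij iS in jS.
Qed.

Lemma charperm_sign k t (g : {perm pt k}) j :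
  (forall z, g z = signchange j z) -> charperm t g.
Proof.
move=> Hg S; exists S, (j \in val S) => z.
by rewrite /Mentry -prod_signchange; apply: eq_bigr => i _; rewrite Hg.
Qed.

Lemma prod_if (R : comRingType) k (S : {set 'I_k}) i (c : R) :
  \prod_(j in S) (if j != i then c else 1) = c ^+ #|S :\ i|.
Proof. by rewrite -prodr_const -big_mkcondr; apply: eq_bigl => j; rewrite !inE andbC. Qed.

Lemma prod_Rmap k (S : {set 'I_k}) i z :
  \prod_(j in S) sgn (Rmap i z j) =
  \prod_(j in S) sgn (z j) * sgn (z i) ^+ #|S :\ i|.
Proof.
rewrite -prod_if -big_split /=; apply: eq_bigr => j _; rewrite ffunE.
case: eqP => [->|_]; first by rewrite mulr1.
by rewrite sgn_addb.
Qed.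

Lemma sgn_expr b n : sgn b ^+ n = sgn (b && odd n).
Proof.
case: b; rewrite /sgn /=; last by rewrite expr1n.
by rewrite -signr_odd; case: (odd n).
Qed.

Lemma charperm_R k t (g : {perm pt k}) i :
  ~~ odd t -> (forall z, g z = Rmap i z) -> charperm t g.
Proof.
move=> et Hg [S HS].
have E z : Mentry (exist _ S HS) (g z) =
    \prod_(j in S) sgn (z j) * sgn (z i && odd #|S :\ i|).
  by rewrite /Mentry /= Hg prod_Rmap sgn_expr.
case: (boolP (odd #|S :\ i|)) => on.
- case: (boolP (i \in S)) => iS.
  + have HS' : (0 < #|S :\ i| <= t)%N.
      move: (HS); rewrite (cardsD1 i S) iS; case: (#|S :\ i|) on => //= n _.
      by move=> H; lia.
    exists (exist _ (S :\ i) HS'), false => z.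
    rewrite E mul1r /Mentry /= (bigD1 i) //= on andbT mulrC mulrA sgn_sq mul1r.
    by apply: eq_bigl => j; rewrite !inE andbC.
  + have HS' : (0 < #|i |: S| <= t)%N.
      rewrite cardsU1 iS add1n /=.
      have /andP [_ H] := HS; rewrite (cardsD1 i S) (negbTE iS) add0n in H.
      rewrite (cardsD1 i S) (negbTE iS) add0n ltn_neqAle H andbT; apply/negP => /eqP E'; move: on; rewrite E'.
      by rewrite (negbTE et).
    exists (exist _ (i |: S) HS'), false => z.
    by rewrite E mul1r /Mentry /= big_setU1 //= on andbT mulrC.
- exists (exist _ S HS), false => z.
  by rewrite E mul1r /Mentry /= (negbTE on) andbF mulr1.
Qed.

Definition cnt N k (z : 'I_N -> pt k) (S : {set 'I_k}) (u : pt k) :=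
  #|[set r | [forall j in S, sgn (z r j) == sgn (u j)]]|.
Definition csum N k (z : 'I_N -> pt k) (T : {set 'I_k}) : int :=
  \sum_r \prod_(j in T) sgn (z r j).

Lemma card_int (T : finType) (A : {pred T}) :
  (#|A| : int) = \sum_(x in A) 1.
Proof. by rewrite sumr_const natz. Qed.

Lemma ind_prod k (S : {set 'I_k}) (w u : pt k) :
  (if [forall j in S, sgn (w j) == sgn (u j)] then 2 ^+ #|S| else 0 : int) =
  \prod_(j in S) (1 + sgn (u j) * sgn (w j)).
Proof.
case: (boolP [forall j in S, _]) => [/forallP H | /forallPn [j]].
  rewrite -prodr_const; apply: eq_bigr => j jS.
  by have /implyP/(_ jS)/eqP <- := H j; rewrite sgn_sq.
rewrite negb_imply => /andP [jS ne].
rewrite (bigD1 j jS) /= -sgn_addb.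
have -> : u j (+) w j = true by move: ne; case: (u j); case: (w j).
by rewrite mul0r.
Qed.

Lemma expand k (S : {set 'I_k}) (c : 'I_k -> int) :
  \prod_(j in S) (1 + c j) =
  \sum_(f : pt k) \prod_j (if f j then (if j \in S then c j else 0) else 1).
Proof.
rewrite big_mkcond.
transitivity (\prod_j \sum_(b : bool)
   (if b then (if j \in S then c j else 0) else 1)).
  by apply: eq_bigr => j _; rewrite big_bool /=; case: (j \in S); rewrite addrC ?add0r.
by rewrite bigA_distr_bigA.
Qed.

Lemma lemmaB N k t (z : 'I_N -> pt k) :
  (forall T : {set 'I_k}, (0 < #|T| <= t)%N -> csum z T = 0) ->
  forall S : {set 'I_k}, #|S| = t -> forall u, (cnt z S u * 2 ^ t)%N = N.
Proof.
move=> HT S HS u.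
suff H : ((cnt z S u)%:Z * 2 ^+ t = N%:Z).
  apply/eqP; rewrite -eqz_nat PoszM -H; apply/eqP; congr (_ * _).
  by elim: (t) => // n IH; rewrite expnS exprS PoszM IH.
rewrite /cnt card_int big_mkcond mulr_suml.
transitivity (\sum_r \prod_(j in S) (1 + sgn (u j) * sgn (z r j))).
  apply: eq_bigr => r _; rewrite -ind_prod inE HS.
  by case: ifP; rewrite ?mul1r ?mul0r.
under eq_bigr do rewrite expand.
rewrite exchange_big (bigD1 [ffun => false]) //=.
rewrite [X in _ + X]big1 ?addr0.
  rewrite (eq_bigr (fun _ => 1)); first by rewrite sumr_const card_ord natz.
  by move=> r _; rewrite big1 // => j _; rewrite ffunE.
move=> f fne.
case: (boolP [exists j, f j && (j \notin S)]) => [/existsP [j /andP [fj jS]] | H].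
  by rewrite big1 // => r _; rewrite (bigD1 j) //= fj (negbTE jS) mul0r.
set T := [set j | f j].
have TS : T \subset S.
  apply/subsetP => j; rewrite inE => fj; apply/negPn/negP => jS.
  by move/negP: H; apply; apply/existsP; exists j; rewrite fj jS.
have HT' : (0 < #|T| <= t)%N.
  rewrite -HS subset_leq_card // andbT; apply/card_gt0P.
  case: (pickP f) => [j fj | nf]; first by exists j; rewrite inE.
  by move: fne; rewrite (_ : f = [ffun => false]) ?eqxx //; apply/ffunP => j; rewrite ffunE nf.
transitivity (\sum_r (\prod_(j in T) sgn (u j)) * \prod_(j in T) sgn (z r j)).
  apply: eq_bigr => r _; rewrite -big_split /= [RHS]big_mkcond /=.
  apply: eq_bigr => j _; rewrite inE.
  case fj: (f j) => //; have := subsetP TS j; rewrite inE fj => /(_ isT) ->.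
  by [].
by rewrite -mulr_sumr -/(csum z T) HT // mulr0.
Qed.

Lemma superset k (T : {set 'I_k}) m :
  (#|T| <= m <= k)%N -> exists S : {set 'I_k}, T \subset S /\ #|S| = m.
Proof.
elim: m => [|m IH] H.
  by exists T; split => //; apply/eqP; rewrite -leqn0; case/andP: H.
case/andP: H => H1 H2.
case: (ltnP #|T| m.+1) => lt; last first.
  by exists T; split => //; apply/eqP; rewrite eqn_leq H1 lt.
have [S [TS cS]] := IH (introT andP (conj lt (ltnW H2))).
case: (pickP (fun x => x \notin S)) => [x xS | allS].
  exists (x |: S); split; first exact: subset_trans TS (subsetU1 x S).
  by rewrite cardsU1 xS cS.
have : S = setT by apply/setP => x; have := allS x; rewrite inE /= => /negbFE ->.
move=> ES; have : #|S| = k by rewrite ES cardsT card_ord.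
by rewrite cS => E; rewrite E ltnn in H2.
Qed.

Lemma sc_invol k (j : 'I_k) : involutive (signchange j).
Proof. by move=> u; apply/ffunP => i; rewrite !ffunE; case: eqP => // _; rewrite negbK. Qed.

Lemma lemmaA N k t (z : 'I_N -> pt k) :
  (t <= k)%N ->
  (forall S : {set 'I_k}, #|S| = t -> forall u, (cnt z S u * 2 ^ t)%N = N) ->
  forall T : {set 'I_k}, (0 < #|T| <= t)%N -> csum z T = 0.
Proof.
move=> tk HO T /andP [T0 Tt].
have [S [TS cS]] := superset (introT andP (conj Tt tk)).
pose PS := [pred u : pt k | [forall j, (j \notin S) ==> ~~ u j]].
pose c (u : pt k) := \prod_(j in T) sgn (u j).
have step3 : forall r, \prod_(j in T) sgn (z r j) =
    \sum_(u | PS u) (if [forall j in S, sgn (z r j) == sgn (u j)] then c u else 0).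
  move=> r; pose u0 : pt k := [ffun j => (j \in S) && z r j].
  have P0 : PS u0.
    by rewrite inE; apply/forallP => j; apply/implyP => jS; rewrite ffunE (negbTE jS).
  rewrite (bigD1 u0 P0) /= [X in _ + X]big1 ?addr0.
    have -> : [forall j in S, sgn (z r j) == sgn (u0 j)].
      by apply/forallP => j; apply/implyP => jS; rewrite ffunE jS.
    by rewrite /c; apply: eq_bigr => j jT; rewrite ffunE (subsetP TS j jT).
  move=> u /andP [Pu ne]; case: ifP => // /forallP Hc.
  case/negP: ne; apply/eqP/ffunP => j; rewrite ffunE.
  case: (boolP (j \in S)) => jS /=.
    by have /implyP/(_ jS) := Hc j; rewrite sgn_eq => /eqP.
  by move: Pu => /forallP /(_ j) /implyP /(_ jS) /negbTE.
have step4 : csum z T * 2 ^+ t = N%:Z * \sum_(u | PS u) c u.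
  rewrite /csum (eq_bigr _ (fun r _ => step3 r)) exchange_big mulr_suml mulr_sumr.
  apply: eq_bigr => u _.
  have := HO S cS u; rewrite /cnt => E.
  rewrite -[in RHS]E PoszM card_int big_mkcond /= mulr_suml mulrC mulrA.
  rewrite -mulr_suml; congr (_ * _).
    rewrite mulr_sumr [RHS]big_mkcond /=; apply: eq_bigr => r _; rewrite inE; by case: ifP; rewrite ?mulr1 ?mulr0.
  by elim: (t) => // n IH; rewrite expnS exprS PoszM IH.
have step5 : \sum_(u | PS u) c u = 0.
  case/card_gt0P: T0 => j0 j0T.
  have j0S := subsetP TS j0 j0T.
  have E : \sum_(u | PS u) c u = - \sum_(u | PS u) c u.
    rewrite {1}(reindex_inj (inv_inj (sc_invol j0))) /= -sumrN.
    apply: eq_big => u.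
      apply: eq_forallb => j; rewrite ffunE.
      by case: (altP (j =P j0)) => // ->; rewrite j0S.
    by move=> _; rewrite /c prod_signchange j0T /sgn mulN1r.
  by move: E; lia.
move: step4; rewrite step5 mulr0 => /eqP; rewrite mulf_eq0 expf_eq0 /=.
by rewrite andbF orbF => /eqP.
Qed.

Definition zof N k (X : 'M[int]_(N, k)) (r : 'I_N) : pt k := [ffun j => X r j == -1].
Definition applyg N k (g : {perm pt k}) (X : 'M[int]_(N, k)) : 'M[int]_(N, k) :=
  \matrix_(r, j) sgn (g (zof X r) j).
Definition pm1 N k (X : 'M[int]_(N, k)) := forall r j, X r j = 1 \/ X r j = -1.

Lemma X_sgn N k (X : 'M[int]_(N, k)) r j : pm1 X -> X r j = sgn (zof X r j).
Proof. by move=> H; rewrite ffunE; case: (H r j) => ->. Qed.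

Lemma zof_applyg N k g (X : 'M[int]_(N, k)) r : zof (applyg g X) r = g (zof X r).
Proof. by apply/ffunP => j; rewrite !ffunE mxE sgnN1. Qed.

Lemma pm1_applyg N k g (X : 'M[int]_(N, k)) : pm1 (applyg g X).
Proof. by move=> r j; rewrite mxE; case: (g _ j); [right|left]. Qed.

Lemma applygM N k (a b : {perm pt k}) (X : 'M[int]_(N, k)) :
  applyg (a * b)%g X = applyg b (applyg a X).
Proof. by apply/matrixP => r j; rewrite !mxE zof_applyg permM. Qed.

Lemma forall_sgn k (a b : pt k) :
  [forall j, sgn (a j) == sgn (b j)] = (a == b).
Proof.
apply/forallP/eqP => [H|->] //; apply/ffunP => j.
by have := H j; rewrite sgn_eq => /eqP.
Qed.

Lemma freq_applyg N k g (X : 'M[int]_(N, k)) :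
  pm1 X -> freq (applyg g X) = act_freq g (freq X).
Proof.
move=> H; apply/ffunP => w; rewrite !ffunE.
apply: eq_card => r; rewrite !inE.
have -> : [forall j, applyg g X r j == sgn (w j)] = [forall j, sgn (g (zof X r) j) == sgn (w j)].
  by apply: eq_forallb => j; rewrite mxE.
have -> : [forall j, X r j == sgn ((g^-1)%g w j)] = [forall j, sgn (zof X r j) == sgn ((g^-1)%g w j)].
  by apply: eq_forallb => j; rewrite -X_sgn.
rewrite !forall_sgn; apply/eqP/eqP => [<-|->]; first by rewrite permK.
by rewrite permKV.
Qed.

Lemma OA_cnt N k (X : 'M[int]_(N, k)) (S : {set 'I_k}) (u : pt k) : pm1 X ->
  #|[set r : 'I_N | [forall j in S, X r j == sgn (u j)]]| = cnt (zof X) S u.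
Proof.
move=> H; apply: eq_card => r; rewrite !inE; apply: eq_forallb => j.
by rewrite -X_sgn.
Qed.

Lemma OA_applyg N k t g (X : 'M[int]_(N, k)) :
  (t <= k)%N -> charperm t g -> is_OA t X -> is_OA t (applyg g X).
Proof.
move=> tk Hg [H1 H2]; split; first exact: pm1_applyg.
move=> S cS u; rewrite OA_cnt; last exact: pm1_applyg.
apply: lemmaB cS u => T HT.
have [S' [e HS]] := Hg (exist _ T HT).
rewrite /csum.
rewrite (eq_bigr (fun r => sgn e * Mentry S' (zof X r))); last first.
  by move=> r _; rewrite zof_applyg -HS.
rewrite -mulr_sumr; apply/eqP; rewrite mulf_eq0; apply/orP; right; apply/eqP.
apply: (lemmaA tk) (valP S') => S0 c0 u0.
by rewrite -OA_cnt //; apply: H2.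
Qed.

Definition ODform N k (X Y : 'M[int]_(N, k)) :=
  exists (sP : {perm 'I_N}) (eP : 'I_N -> bool)
         (sQ : {perm 'I_(1 + k)}) (eQ : 'I_(1 + k) -> bool),
    forall r l, onecol Y r (sQ l) = sgn (eP r) * onecol X (sP r) l * sgn (eQ l).

Lemma ODform_refl N k (X : 'M[int]_(N, k)) : ODform X X.
Proof.
exists 1%g, (fun _ => false), 1%g, (fun _ => false) => r l.
by rewrite !perm1 /sgn mul1r mulr1.
Qed.

Lemma ODform_trans N k (X Y Z : 'M[int]_(N, k)) :
  ODform X Y -> ODform Y Z -> ODform X Z.
Proof.
move=> [sP [eP [sQ [eQ H1]]]] [sP' [eP' [sQ' [eQ' H2]]]].
exists (sP' * sP)%g, (fun r => eP' r (+) eP (sP' r)), (sQ * sQ')%g,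
  (fun l => eQ l (+) eQ' (sQ l)) => r l.
rewrite !permM H2 H1 !sgn_addb; ring.
Qed.

Lemma ODform_equiv N k (X Y : 'M[int]_(N, k)) : ODform X Y -> OD_equiv X Y.
Proof.
move=> [sP [eP [sQ [eQ H]]]].
exists (\matrix_(i, j) (if sP i == j then sgn (eP i) else 0)),
       (\matrix_(i, j) (if sQ i == j then sgn (eQ i) else 0)).
split; first by exists sP, eP.
split; first by exists sQ, eQ.
rewrite /onecol in H *; move: (row_mx _ X) (row_mx _ Y) H => MX MY H.
apply/matrixP => r j; rewrite -[in RHS](permKV sQ j) H mxE.
rewrite (bigD1 ((sQ^-1)%g j)) //= big1 ?addr0; last first.
  move=> l ne; rewrite mxE; case: eqP => [E|_]; last by rewrite mulr0.
  by move: ne; rewrite -E permK eqxx.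
rewrite [X in _ * X]mxE permKV eqxx mxE.
rewrite (bigD1 (sP r)) //= big1 ?addr0; last first.
  by move=> m ne; rewrite mxE eq_sym (negbTE ne) mul0r.
by rewrite !mxE eqxx.
Qed.

Lemma onecol0 N k (X : 'M[int]_(N, k)) r : onecol X r (ord0 : 'I_(1 + k)) = 1.
Proof.
have -> : (ord0 : 'I_(1 + k)) = lshift k (ord0 : 'I_1) by apply: val_inj.
by rewrite /onecol row_mxEl mxE.
Qed.

Lemma onecolS N k (X : 'M[int]_(N, k)) r (m : 'I_k) :
  onecol X r (lift (ord0 : 'I_(1 + k)) m) = X r m.
Proof.
have -> : lift (ord0 : 'I_(1 + k)) m = rshift 1 m by apply: val_inj.
by rewrite /onecol row_mxEr.
Qed.

Lemma ODform_coord N k (g : {perm pt k}) (s : {perm 'I_k}) (X : 'M[int]_(N, k)) :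
  pm1 X -> (forall z, g z = coordperm s z) -> ODform X (applyg g X).
Proof.
move=> pX Hg.
exists 1%g, (fun _ => false), (lift_perm ord0 ord0 (s^-1)%g), (fun _ => false) => r l.
rewrite perm1 /sgn mul1r mulr1.
case: (unliftP ord0 l) => [m ->|->].
  by rewrite lift_perm_lift !onecolS mxE Hg ffunE permKV -X_sgn.
by rewrite lift_perm_id !onecol0.
Qed.

Lemma ODform_sign N k (g : {perm pt k}) (j : 'I_k) (X : 'M[int]_(N, k)) :
  pm1 X -> (forall z, g z = signchange j z) -> ODform X (applyg g X).
Proof.
move=> pX Hg.
exists 1%g, (fun _ => false), 1%g, (fun l => l == lift ord0 j) => r l.
rewrite !perm1 mul1r.
case: (unliftP ord0 l) => [m ->|->].
  rewrite !onecolS mxE Hg ffunE (inj_eq (@lift_inj _ ord0)) (X_sgn _ _ pX).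
  by case: eqP => _; rewrite ?sgn_neg /sgn ?mulrN1 ?mulr1.
by rewrite !onecol0 (negbTE (neq_lift _ _)) /sgn mulr1.
Qed.

Lemma ODform_R N k (g : {perm pt k}) (i : 'I_k) (X : 'M[int]_(N, k)) :
  pm1 X -> (forall z, g z = Rmap i z) -> ODform X (applyg g X).
Proof.
move=> pX Hg.
exists 1%g, (fun r => zof X r i), (tperm ord0 (lift ord0 i)), (fun _ => false) => r l.
rewrite !perm1 /sgn [in X in _ * X]/= mulr1 -/(sgn _).
case: (unliftP ord0 l) => [m ->|->].
  case: (altP (m =P i)) => [->|ne].
    by rewrite tpermR onecol0 onecolS (X_sgn _ _ pX) sgn_sq.
  rewrite tpermD; last 2 first.
  - exact: neq_lift.
  - by rewrite (inj_eq (@lift_inj _ ord0)) eq_sym.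
  rewrite !onecolS mxE Hg ffunE (negbTE ne) sgn_addb (X_sgn _ _ pX).
  by rewrite mulrC.
by rewrite tpermL onecol0 onecolS mxE Hg ffunE eqxx mulr1.
Qed.

Lemma charperm_isog k t (g : {perm pt k}) : g \in iso_gens k -> charperm t g.
Proof.
rewrite inE => /orP [/existsP [s /forallP H] | /existsP [j /forallP H]].
  by apply: (charperm_coord (s := s)) => z; apply/eqP.
by apply: (charperm_sign (j := j)) => z; apply/eqP.
Qed.

Lemma charperm_ODg k t (g : {perm pt k}) : ~~ odd t -> g \in OD_gens k -> charperm t g.
Proof.
move=> et; rewrite inE => /orP [H|]; first exact: charperm_isog.
rewrite inE => /existsP [i /forallP H].
by apply: (charperm_R (i := i)) => // z; apply/eqP.
Qed.

Lemma ODform_isog N k (g : {perm pt k}) (X : 'M[int]_(N, k)) :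
  pm1 X -> g \in iso_gens k -> ODform X (applyg g X).
Proof.
move=> pX; rewrite inE => /orP [/existsP [s /forallP H] | /existsP [j /forallP H]].
  by apply: (ODform_coord (s := s)) => // z; apply/eqP.
by apply: (ODform_sign (j := j)) => // z; apply/eqP.
Qed.

Lemma ODform_ODg N k (g : {perm pt k}) (X : 'M[int]_(N, k)) :
  pm1 X -> g \in OD_gens k -> ODform X (applyg g X).
Proof.
move=> pX; rewrite inE => /orP [H|]; first exact: ODform_isog.
rewrite inE => /existsP [i /forallP H].
by apply: (ODform_R (i := i)) => // z; apply/eqP.
Qed.

Lemma applyg1 N k (X : 'M[int]_(N, k)) : pm1 X -> applyg 1%g X = X.
Proof. by move=> pX; apply/matrixP => r j; rewrite mxE perm1 -X_sgn. Qed.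

Lemma ODform_G N k (g : {perm pt k}) (X : 'M[int]_(N, k)) :
  pm1 X -> g \in G_OD k -> ODform X (applyg g X).
Proof.
move=> pX gG; move: g gG X pX.
apply: (gen_ind (P := fun g => forall X : 'M[int]_(N, k), pm1 X -> ODform X (applyg g X))).
  by move=> X pX; rewrite applyg1 //; exact: ODform_refl.
move=> a b Ha bA X pX; rewrite applygM.
apply: ODform_trans (Ha X pX) _; apply: ODform_ODg bA; exact: pm1_applyg.
Qed.

Lemma charperm_GOD k t (g : {perm pt k}) : ~~ odd t -> g \in G_OD k -> charperm t g.
Proof.
move=> et; move: g; apply: gen_ind; first exact: charperm1.
move=> a b Ha bA; exact: (charpermM Ha (charperm_ODg et bA)).
Qed.

Lemma charperm_Giso k t (g : {perm pt k}) : g \in G_iso k -> charperm t g.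
Proof.
move: g; apply: gen_ind; first exact: charperm1.
move=> a b Ha bA; exact: (charpermM Ha (charperm_isog (t := t) bA)).
Qed.

Theorem lemma9 (N k t : nat) (X : 'M[int]_(N, k)) :
  (1 <= t)%N -> (t <= k - 1)%N -> is_OA t X ->
  (~~ odd t ->
     (forall g, g \in G_OD k -> formulation_sym N t g) /\
     (forall g, g \in G_OD k ->
        exists Y : 'M[int]_(N, k),
          is_OA t Y /\ freq Y = act_freq g (freq X) /\ OD_equiv X Y)) /\
  (odd t ->
     (forall g, g \in G_iso k -> formulation_sym N t g) /\
     (forall g, g \in G_iso k ->
        exists Y : 'M[int]_(N, k),
          is_OA t Y /\ freq Y = act_freq g (freq X) /\ isomorphic X Y)).
Proof.
move=> t1 tk1 OX; have tk : (t <= k)%N by lia.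
have pX : pm1 X := proj1 OX.
split => et; split.
- move=> g gG; apply: charperm_formsym; apply: charperm_GOD => //.
  by rewrite /G_OD groupV.
- move=> g gG; exists (applyg g X); split; first exact: OA_applyg (charperm_GOD et gG) OX.
  split; first exact: freq_applyg.
  exact: ODform_equiv (ODform_G pX gG).
- move=> g gG; apply: charperm_formsym; apply: charperm_Giso.
  by rewrite /G_iso groupV.
- move=> g gG; exists (applyg g X); split; first exact: OA_applyg (charperm_Giso (t := t) gG) OX.
  split; first exact: freq_applyg.
  by exists g => //; exact: freq_applyg.
Qed.
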